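(* For each $t\in\Bbbk$ there is a unique automorphism $\sigma_t$ of $A$ with $\sigma_t(x)=x$ and $\sigma_t(y)=y+tx^{N-1}$, and it is central in $\mathrm{Aut}(A)$. The map $t\in\Bbbk\mapsto\sigma_t\in\mathrm{Aut}(A)$ is an injective group homomorphism from the additive group of $\Bbbk$ whose image is exactly the center of $\mathrm{Aut}(A)$.
   Context: Let $\Bbbk$ be a field of characteristic zero and $N\geq1$ an integer. Let $A=A_N$ be the $\Bbbk$-algebra generated by $x,y$ subject to the relation $yx-xy=x^N$, and $\mathrm{Aut}(A)$ its group of algebra automorphisms. *)

(* Defs.v *)
From HB Require Import structures.
From mathcomp Require Import all_boot all_order all_algebra.
Set Implicit Arguments. Unset Strict Implicit. Unset Printing Implicit Defensive.
Import GRing.Theory.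
Local Open Scope ring_scope.

Definition is_alg_hom (K : fieldType) (A B : algType K) (f : A -> B) : Prop :=
  (forall a b, f (a + b) = f a + f b) /\
  (forall a b, f (a * b) = f a * f b) /\
  f 1 = 1 /\
  (forall (c : K) a, f (c *: a) = c *: f a).

Definition is_alg_aut (K : fieldType) (A : algType K) (f : A -> A) : Prop :=
  is_alg_hom f /\ bijective f.

(* (A, x, y) is a presentation of the K-algebra generated by x, y subject to
   the single relation  y x - x y = x^N  (universal property of the quotient
   of the free algebra K<x,y> by the two-sided ideal generated by the relation). *)
Definition presents_AN (K : fieldType) (N : nat) (A : algType K) (x y : A) : Prop :=
  y * x - x * y = x ^+ N /\
  forall (B : algType K) (a b : B), b * a - a * b = a ^+ N ->
    exists f : A -> B,
      [/\ is_alg_hom f, f x = a, f y = b &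
          forall g : A -> B, is_alg_hom g -> g x = a -> g y = b -> g =1 f].

(* Main.v *)
From HB Require Import structures.
Require Import Defs.
From mathcomp Require Import all_boot all_order all_algebra.
From mathcomp Require Import ring zify.
From Stdlib Require Import ClassicalEpsilon.
Set Implicit Arguments. Unset Strict Implicit. Unset Printing Implicit Defensive.
Import GRing.Theory.
Local Open Scope ring_scope.


Lemma horner_algE (K : fieldType) (A : algType K) (a : A) (p : {poly K}) :
  horner_alg a p = \sum_(i < size p) p`_i *: a ^+ i.
Proof.
rewrite [in LHS](_ : p = \sum_(i < size p) p`_i *: 'X^i); last by rewrite -poly_def coefK.
rewrite linear_sum; apply: eq_bigr => i _.
by rewrite linearZ rmorphXn /= horner_algX mulr_algl.
Qed.

Section Basic.
Variables (K : fieldType) (N : nat) (A : algType K) (x y : A).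
Hypothesis rel : y * x - x * y = x ^+ N.

Local Notation ev := (horner_alg x).

Lemma relE : y * x = x * y + x ^+ N.
Proof. by rewrite -rel addrC subrK. Qed.

Lemma evX : ev 'X = x. Proof. exact: horner_algX. Qed.
Lemma evC c : ev c%:P = c%:A. Proof. exact: horner_algC. Qed.

Lemma ev_commx p : ev p * x = x * ev p.
Proof. by rewrite -[X in _ * X = _]evX -[X in _ = X * _]evX -!rmorphM /= mulrC. Qed.

Lemma y_ev p : y * ev p = ev p * y + ev (p^`() * 'X^N).
Proof.
elim/poly_ind: p => [|p c IH]; first by rewrite deriv0 mul0r !rmorph0 mulr0 mul0r addr0.
rewrite derivMXaddC !rmorphD !rmorphM /= evX evC mulrDr mulrA IH mulrDl.
rewrite rmorphD rmorphM /= rmorphXn /= evX rmorphM /= rmorphXn /= evX.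
rewrite -[ev p * y * x]mulrA relE mulr_algr.
rewrite !mulrDr !mulrDl -!mulrA -exprSr -exprS mulr_algl.
by rewrite -!addrA; congr (_ + _); rewrite addrA addrC.
Qed.



Definition Phi (P : {poly {poly K}}) : A := \sum_(j < size P) ev P`_j * y ^+ j.

Lemma PhiE (P : {poly {poly K}}) : Phi P = \sum_(j < size P) ev P`_j * y ^+ j.
Proof. by []. Qed.

Lemma Phi_widen n (P : {poly {poly K}}) : (size P <= n)%N -> Phi P = \sum_(j < n) ev P`_j * y ^+ j.
Proof.
move=> h; rewrite /Phi (big_ord_widen _ (fun j => ev P`_j * y ^+ j) h) big_mkcond /=.
apply: eq_bigr => i _; case: ltnP => // hi.
by rewrite nth_default // rmorph0 mul0r.
Qed.

Lemma PhiB (P Q : {poly {poly K}}) : Phi (P - Q) = Phi P - Phi Q.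
Proof.
set n := maxn (size P) (size Q).
have hPQ : (size (P - Q)%R <= n)%N.
  by apply: leq_trans (size_polyD _ _) _; rewrite size_polyN.
rewrite (Phi_widen hPQ) (@Phi_widen n P) ?leq_maxl // (@Phi_widen n Q) ?leq_maxr // -sumrB.
by apply: eq_bigr => i _; rewrite coefB rmorphB mulrBl.
Qed.

Lemma Phi0 : Phi 0 = 0.
Proof. by rewrite /Phi size_poly0 big_ord0. Qed.

Lemma PhiN (P : {poly {poly K}}) : Phi (- P) = - Phi P.
Proof. by rewrite -sub0r PhiB Phi0 sub0r. Qed.

Lemma PhiD (P Q : {poly {poly K}}) : Phi (P + Q) = Phi P + Phi Q.
Proof. by rewrite -{1}(opprK Q) PhiB PhiN opprK. Qed.

Lemma Phi_sum n (F : 'I_n -> {poly {poly K}}) :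
  Phi (\sum_(i < n) F i) = \sum_(i < n) Phi (F i).
Proof. by apply: big_morph; [exact: PhiD | exact: Phi0]. Qed.

Lemma PhiCmul (q : {poly K}) (R : {poly {poly K}}) : Phi (q%:P * R) = ev q * Phi R.
Proof.
have h : (size (q%:P * R)%R <= size R)%N by rewrite mul_polyC size_scale_leq.
rewrite (Phi_widen h) /Phi mulr_sumr; apply: eq_bigr => i _.
by rewrite coefCM rmorphM mulrA.
Qed.

Lemma PhiC (q : {poly K}) : Phi q%:P = ev q.
Proof.
rewrite (Phi_widen (size_polyC_leq1 q)) big_ord1 coefC /=.
by rewrite expr0 mulr1.
Qed.

Lemma Phi1 : Phi 1 = 1.
Proof. by rewrite -polyC1 PhiC rmorph1. Qed.

Lemma PhiXn j : Phi 'X^j = y ^+ j.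
Proof.
rewrite /Phi size_polyXn big_ord_recr /= coefXn eqxx rmorph1 mul1r big1 ?add0r //.
by move=> i _; rewrite coefXn ltn_eqF // rmorph0 mul0r.
Qed.

Lemma PhiXM (R : {poly {poly K}}) : Phi ('X * R) = \sum_(j < size R) ev R`_j * y ^+ j.+1.
Proof.
have h : (size ('X * R)%R <= (size R).+1)%N.
  by apply: leq_trans (size_polyMleq _ _) _; rewrite size_polyX.
rewrite (Phi_widen h) big_ord_recl coefXM eqxx rmorph0 mul0r add0r.
by apply: eq_bigr => i _; rewrite coefXM /=.
Qed.

Definition Ly (R : {poly {poly K}}) : {poly {poly K}} :=
  'X * R + \poly_(j < size R) ((R`_j)^`() * 'X^N).

Lemma Phi_y (R : {poly {poly K}}) : y * Phi R = Phi (Ly R).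
Proof.
rewrite /Ly PhiD PhiXM (Phi_widen (size_poly _ _)) -big_split /=.
rewrite /Phi mulr_sumr; apply: eq_bigr => j _.
by rewrite mulrA y_ev mulrDl coef_poly ltn_ord -mulrA -exprS.
Qed.

Lemma Phi_iter j (Q : {poly {poly K}}) : y ^+ j * Phi Q = Phi (iter j Ly Q).
Proof.
elim: j => [|j IH]; first by rewrite expr0 mul1r.
by rewrite exprS -mulrA IH Phi_y.
Qed.

Definition mulPQ (P Q : {poly {poly K}}) : {poly {poly K}} :=
  \sum_(j < size P) (P`_j)%:P * iter j Ly Q.

Lemma Phi_mul (P Q : {poly {poly K}}) : Phi P * Phi Q = Phi (mulPQ P Q).
Proof.
rewrite [Phi P]/Phi mulr_suml /mulPQ Phi_sum; apply: eq_bigr => j _.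
by rewrite PhiCmul -Phi_iter mulrA.
Qed.

End Basic.


Section Hom.
Variables (K : fieldType) (A B : algType K).

Lemma hom0 (f : A -> B) : is_alg_hom f -> f 0 = 0.
Proof. case=> hD _; apply/eqP; rewrite -(addrI (f 0) (_ : f 0 + f 0 = f 0 + 0)) //. by rewrite -hD !addr0. Qed.

Lemma homN (f : A -> B) a : is_alg_hom f -> f (- a) = - f a.
Proof. move=> h; have := h => -[hD _]; apply/eqP; rewrite -subr_eq0 opprK -hD addNr; apply/eqP; exact: hom0. Qed.

Lemma homD (f : A -> B) a b : is_alg_hom f -> f (a + b) = f a + f b.
Proof. by case. Qed.

Lemma homB (f : A -> B) a b : is_alg_hom f -> f (a - b) = f a - f b.
Proof. by move=> h; rewrite homD // homN. Qed.

Lemma homM (f : A -> B) a b : is_alg_hom f -> f (a * b) = f a * f b.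
Proof. by case=> _ []. Qed.

Lemma hom1 (f : A -> B) : is_alg_hom f -> f 1 = 1.
Proof. by case=> _ [_ []]. Qed.

Lemma homZ (f : A -> B) c a : is_alg_hom f -> f (c *: a) = c *: f a.
Proof. by case=> _ [_ [_]]. Qed.

Lemma homX (f : A -> B) a n : is_alg_hom f -> f (a ^+ n) = f a ^+ n.
Proof. by move=> h; elim: n => [|n IH]; rewrite ?expr0 ?hom1 // !exprS homM // IH. Qed.

Lemma homA (f : A -> B) c : is_alg_hom f -> f c%:A = c%:A.
Proof. by move=> h; rewrite homZ // hom1. Qed.

Lemma hom_ev (f : A -> B) (a : A) p : is_alg_hom f ->
  f (horner_alg a p) = horner_alg (f a) p.
Proof.
move=> h; rewrite !horner_algE.
elim/big_rec2: _ => [|i u v _ <-]; first exact: hom0.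
by rewrite homD // homZ // homX.
Qed.

End Hom.

Lemma hom_comp (K : fieldType) (A B C : algType K) (f : A -> B) (g : B -> C) :
  is_alg_hom f -> is_alg_hom g -> is_alg_hom (g \o f).
Proof.
move=> hf hg; split; [by move=> a b /=; rewrite (homD _ _ hf) (homD _ _ hg) | split;
  [by move=> a b /=; rewrite (homM _ _ hf) (homM _ _ hg) | split;
   [by rewrite /= (hom1 hf) (hom1 hg) | by move=> c a /=; rewrite (homZ _ _ hf) (homZ _ _ hg)]]].
Qed.

Lemma hom_id (K : fieldType) (A : algType K) : is_alg_hom (@id A).
Proof. by []. Qed.

Section Span.
Variables (K : fieldType) (N : nat) (A : algType K) (x y : A).
Hypothesis HA : presents_AN N x y.

Let rel : y * x - x * y = x ^+ N := HA.1.

Lemma uniq_hom (B : algType K) (g1 g2 : A -> B) :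
  is_alg_hom g1 -> is_alg_hom g2 -> g1 x = g2 x -> g1 y = g2 y -> g1 =1 g2.
Proof.
move=> h1 h2 ex ey.
have r : g1 y * g1 x - g1 x * g1 y = g1 x ^+ N by rewrite -!homM // -homB // rel homX.
have [f [_ _ _ U]] := HA.2 B _ _ r.
by move=> a; rewrite (U _ h1) // (U _ h2).
Qed.

Definition inS (a : A) : Prop := exists P, Phi x y P = a.

Definition Sb : {pred A} :=
  fun a => if excluded_middle_informative (inS a) then true else false.
Lemma SbP a : reflect (inS a) (a \in Sb).
Proof. rewrite /in_mem /= /Sb; case: excluded_middle_informative => h; constructor => //. Qed.

Lemma Sb_closed : GRing.subsemialg_closed Sb.
Proof.
split; first by apply/SbP; exists 1; rewrite Phi1.
- split; first by apply/SbP; exists 0; rewrite Phi0.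
  by move=> a b /SbP [P <-] /SbP [Q <-]; apply/SbP; exists (P + Q); rewrite PhiD.
- move=> c a /SbP [P <-]; apply/SbP; exists ((c%:P)%:P * P).
  by rewrite PhiCmul horner_algC mulr_algl.
- move=> a b /SbP [P <-] /SbP [Q <-]; apply/SbP; exists (mulPQ N P Q).
  by rewrite (Phi_mul rel).
Qed.

HB.instance Definition _ := GRing.isSubalgClosed.Build K A Sb Sb_closed.
Record sT := SubT { sval : A; _ : sval \in Sb }.
HB.instance Definition _ := [isSub for sval].
HB.instance Definition _ := [Choice of sT by <:].
HB.instance Definition _ := [SubChoice_isSubAlgebra of sT by <:].

Lemma Phi_surj a : exists P, Phi x y P = a.
Proof.
have hx : x \in Sb by apply/SbP; exists ('X%:P); rewrite PhiC horner_algX.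
have hy : y \in Sb by apply/SbP; exists 'X; rewrite (PhiXn x y 1) expr1.
pose a' : sT := SubT hx.
pose b' : sT := SubT hy.
have r : b' * a' - a' * b' = a' ^+ N.
  by apply: val_inj; rewrite rmorphB !rmorphM rmorphXn.
have [f [hf fx fy _]] := HA.2 sT _ _ r.
have hv : is_alg_hom (val : sT -> A).
  split; [by move=> u v; rewrite rmorphD | split;
    [by move=> u v; rewrite rmorphM | split; [by rewrite rmorph1 | by move=> c u; rewrite linearZ]]].
have e := uniq_hom (hom_comp hf hv) (@hom_id _ A) _ _.
rewrite /= fx fy in e.
have := valP (f a); rewrite [val (f a)](e erefl erefl a).
by move/SbP.
Qed.

End Span.


Section Mat.
Variables (K : fieldType) (N m : nat).
Hypothesis HN : (0 < N)%N.

Definition Ma : 'M[K]_m.+1 := \matrix_(i, j) ((j == i.+1 :> nat)%:R).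
Definition Dg : 'M[K]_m.+1 := diag_mx (\row_(i < m.+1) (i%:R : K)).
Definition Mb : 'M[K]_m.+1 := - (Dg * Ma ^+ N.-1).

Lemma MaDg : Ma * Dg - Dg * Ma = Ma.
Proof.
apply/matrixP => i j; rewrite -!mulmxE mul_mx_diag mul_diag_mx !mxE.
case: eqP => [->|_]; last by rewrite mul0r mulr0 subr0.
by rewrite mul1r mulr1 -addn1 natrD addrAC subrr add0r.
Qed.

Lemma MaMb : Mb * Ma - Ma * Mb = Ma ^+ N.
Proof.
rewrite /Mb mulNr mulrN opprK addrC.
have -> : Dg * Ma ^+ N.-1 * Ma = Dg * Ma * Ma ^+ N.-1 by rewrite -!mulrA -exprSr exprS.
by rewrite mulrA -mulrBl MaDg -exprS prednK.
Qed.

Lemma hornerMa p (j : 'I_m.+1) : (horner_alg Ma p) 0 j = p`_j.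
Proof.
elim/poly_ind: p j => [|p c IH] j; first by rewrite rmorph0 mxE coef0.
rewrite rmorphD rmorphM /= horner_algX horner_algC !mxE coefD coefMX coefC.
under eq_bigr => k _ do rewrite IH mxE.
case: j => [[|j] hj] /=.
  rewrite big1 ?add0r ?mulr1 // => k _.
  by rewrite mulr0.
have hj' : (j < m.+1)%N by apply: ltnW.
rewrite (bigD1 (Ordinal hj')) //= eqxx mulr1 big1 ?addr0 ?mulr0 ?addr0 //.
move=> k /eqP hk; rewrite eqSS; case: eqP => [e|_]; last by rewrite mulr0.
by exfalso; apply: hk; apply: val_inj.
Qed.

End Mat.

Section EvInj.
Variables (K : fieldType) (N : nat) (A : algType K) (x y : A).
Hypothesis HA : presents_AN N x y.
Hypothesis HN : (0 < N)%N.

Lemma ev_inj p : horner_alg x p = 0 -> p = 0.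
Proof.
move=> h0; set m := size p.
have [f [hf fx _ _]] := HA.2 _ _ _ (@MaMb K N m HN).
have := hom_ev x p hf; rewrite h0 (hom0 hf) fx => /esym e.
apply/polyP => i; rewrite coef0.
case: (ltnP i m.+1) => hi; last by rewrite nth_default // ltnW.
by have := hornerMa p (Ordinal hi); rewrite e mxE /= => <-.
Qed.

End EvInj.


Section PolyLemmas.
Variables (K : fieldType) (N : nat).
Implicit Types (P Q R : {poly {poly K}}).

Fixpoint G (j : nat) : {poly {poly K}} :=
  if j is j'.+1 then Ly N (G j') + ('X^N)%:P * 'X^j' else 0.

Lemma coefLy R k : (Ly N R)`_k =
  (if k == 0%N then 0 else R`_k.-1) + (if (k < size R)%N then (R`_k)^`() * 'X^N else 0).
Proof. by rewrite /Ly coefD coefXM coef_poly. Qed.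

Lemma sizeLy R : (size (Ly N R) <= (size R).+1)%N.
Proof.
rewrite /Ly; apply: leq_trans (size_polyD _ _) _; rewrite geq_max; apply/andP; split.
  by apply: leq_trans (size_polyMleq _ _) _; rewrite size_polyX.
by apply: leq_trans (size_poly _ _) _.
Qed.

Lemma sizeG j : (size (G j) <= j)%N.
Proof.
elim: j => [|j IH] /=; first by rewrite size_poly0.
apply: leq_trans (size_polyD _ _) _; rewrite geq_max; apply/andP; split.
  by apply: leq_trans (sizeLy _) _.
by rewrite mul_polyC; apply: leq_trans (size_scale_leq _ _) _; rewrite size_polyXn.
Qed.

Lemma coefG j : (G j.+1)`_j = 'X^N *+ j.+1.
Proof.
elim: j => [|j IH].
  by rewrite /= coefD coefLy size_poly0 /= coefCM coefXn mulr1 !add0r.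
rewrite (_ : G j.+2 = Ly N (G j.+1) + ('X^N)%:P * 'X^(j.+1)) // coefD coefLy.
rewrite ltnNge sizeG /= IH coefCM coefXn eqxx mulr1.
by rewrite addr0 [RHS]mulrSr.
Qed.

Definition CP P : {poly {poly K}} := \sum_(j < size P) (P`_j)%:P * G j.

Lemma sizeCP P : (size (CP P) <= (size P).-1)%N.
Proof.
rewrite /CP; apply: (big_ind (fun Q => size Q <= (size P).-1)%N).
- by rewrite size_poly0.
- by move=> Q1 Q2 h1 h2; apply: leq_trans (size_polyD _ _) _; rewrite geq_max h1 h2.
- move=> j _; rewrite mul_polyC; apply: leq_trans (size_scale_leq _ _) _.
  apply: leq_trans (sizeG _) _; rewrite -ltnS prednK //.
  by apply: leq_ltn_trans (ltn_ord j).
Qed.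

Hypothesis charK0 : [pchar K] =i pred0.

Lemma CP_neq0 P : (1 < size P)%N -> CP P != 0.
Proof.
move=> hs; have [n hn] : exists n, size P = n.+2.
  by exists (size P).-2; case: (size P) hs => [|[|k]].
apply/eqP => /(congr1 (fun Q : {poly {poly K}} => Q`_n)); rewrite coef0 /CP coef_sum.
rewrite hn big_ord_recr big1 ?add0r; last first.
  move=> j _; rewrite coefCM [(G _)`_n]nth_default ?mulr0 //.
  by apply: leq_trans (sizeG _) _; rewrite /= -ltnS ltn_ord.
rewrite coefCM (coefG n) /= add0r => /eqP; rewrite mulf_eq0 -mulr_natr mulf_eq0 => /orP[|/orP[]].
- have : lead_coef P != 0 by rewrite lead_coef_eq0 -size_poly_gt0 hn.
  by rewrite lead_coefE hn => /negPf ->.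
- by rewrite -[_ == 0]negbK -lead_coef_eq0 lead_coefXn oner_eq0.
- by rewrite -polyC_natr polyC_eq0 (pcharf0P _).1.
Qed.

Definition Dp R : {poly {poly K}} := \poly_(i < size R) (R`_i)^`().

Lemma Ly_split R : Ly N R = 'X * R + ('X^N)%:P * Dp R.
Proof.
rewrite /Ly /Dp; congr (_ + _); apply/polyP => i.
by rewrite coefCM !coef_poly; case: ifP; rewrite ?mulr0 // mulrC.
Qed.

Fixpoint LyE j Q : {poly {poly K}} :=
  if j is j'.+1 then 'X * LyE j' Q + Dp (iter j' (Ly N) Q) else 0.

Lemma iterLyE j Q : iter j (Ly N) Q = 'X^j * Q + ('X^N)%:P * LyE j Q.
Proof.
elim: j => [|j IH]; first by rewrite /= expr0 mul1r mulr0 addr0.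
rewrite [iter _ _ _]/= Ly_split {1}IH [LyE j.+1 Q]/= exprS; ring.
Qed.

Lemma mulPQ_comm P Q :
  mulPQ N P Q = P * Q + ('X^N)%:P * \sum_(j < size P) (P`_j)%:P * LyE j Q.
Proof.
rewrite /mulPQ mulr_sumr.
have -> : P * Q = \sum_(j < size P) (P`_j)%:P * ('X^j * Q).
  rewrite -{1}(coefK P) poly_def mulr_suml; apply: eq_bigr => j _.
  by rewrite -mul_polyC mulrA.
rewrite -big_split /=; apply: eq_bigr => j _; rewrite iterLyE; ring.
Qed.

Lemma sizeLy_eq R : R != 0 -> size (Ly N R) = (size R).+1 /\ lead_coef (Ly N R) = lead_coef R.
Proof.
move=> hR; have hX : size ('X * R) = (size R).+1 by rewrite mulrC size_mulX.
have hl : (size (\poly_(j < size R) ((R`_j)^`() * 'X^N))%R < size ('X * R)%R)%N.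
  by rewrite hX ltnS size_poly.
rewrite /Ly (size_polyDl hl) (lead_coefDl hl) hX; split => //.
by rewrite mulrC lead_coefMX.
Qed.

Lemma iterLy_size j R : R != 0 ->
  size (iter j (Ly N) R) = (size R + j)%N /\ lead_coef (iter j (Ly N) R) = lead_coef R.
Proof.
move=> hR; elim: j => [|j [IHs IHl]]; first by rewrite addn0.
have hnz : iter j (Ly N) R != 0.
  by rewrite -size_poly_gt0 IHs addn_gt0 size_poly_gt0 hR.
have [s l] := sizeLy_eq hnz.
by rewrite /= s l IHs IHl addnS.
Qed.

Lemma mulPQ_size P Q : P != 0 -> Q != 0 ->
  size (mulPQ N P Q) = (size P + size Q).-1 /\
  lead_coef (mulPQ N P Q) = lead_coef P * lead_coef Q.
Proof.
move=> hP hQ; have [n hn] : exists n, size P = n.+1.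
  by exists (size P).-1; rewrite prednK // size_poly_gt0.
have hPn : P`_n != 0 by rewrite -[n]/(n.+1.-1) -hn -lead_coefE lead_coef_eq0.
have [s l] := iterLy_size n hQ.
have hT : size ((P`_n)%:P * iter n (Ly N) Q) = (size Q + n)%N by rewrite size_Cmul // s.
have hrest : (size (\sum_(j < n) (P`_(widen_ord (leqnSn n) j))%:P
     * iter (widen_ord (leqnSn n) j) (Ly N) Q)%R < size Q + n)%N.
  apply: (big_ind (fun Q' => size Q' < size Q + n)%N).
  - by rewrite size_poly0 addn_gt0 size_poly_gt0 hQ.
  - by move=> Q1 Q2 h1 h2; apply: leq_ltn_trans (size_polyD _ _) _; rewrite gtn_max h1 h2.
  - move=> j _; rewrite mul_polyC; apply: leq_ltn_trans (size_scale_leq _ _) _.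
    have [s' _] := iterLy_size j hQ; rewrite /= s' ltn_add2l; exact: ltn_ord.
rewrite /mulPQ hn big_ord_recr /= addrC.
rewrite -hT in hrest.
rewrite (size_polyDl hrest) (lead_coefDl hrest) hT lead_coefM lead_coefC l.
by split; [exact: addnC | rewrite (lead_coefE P) hn].
Qed.

End PolyLemmas.


Section Struct.
Variables (K : fieldType) (N : nat) (A : algType K) (x y : A).
Hypothesis HA : presents_AN N x y.
Hypothesis HN : (0 < N)%N.
Hypothesis charK0 : [pchar K] =i pred0.

Let rel : y * x - x * y = x ^+ N := HA.1.
Local Notation Phi := (Phi x y).
Local Notation ev := (horner_alg x).

Lemma PhiG j : Phi (G K N j) = y ^+ j * x - x * y ^+ j.
Proof.
elim: j => [|j IH]; first by rewrite /= Phi0 expr0 mul1r mulr1 subrr.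
rewrite /= PhiD -(Phi_y rel) IH PhiCmul rmorphXn /= horner_algX PhiXn -rel.
rewrite mulrBr mulrBl !mulrA addrA subrK -exprS -mulrA -exprS.
by [].
Qed.

Lemma PhiCP P : Phi (CP N P) = Phi P * x - x * Phi P.
Proof.
rewrite /CP Phi_sum [Phi P]PhiE mulr_suml mulr_sumr -sumrB; apply: eq_bigr => j _.
by rewrite PhiCmul PhiG mulrBr !mulrA ev_commx.
Qed.

Lemma Phi_inj0 P : Phi P = 0 -> P = 0.
Proof.
elim: (size P) {-2}P (leqnn (size P)) => [|n IH] Q hs h.
  by apply/eqP; rewrite -size_poly_eq0 -leqn0.
case: (ltnP 1 (size Q)) => h1.
  have hC : Phi (CP N Q) = 0 by rewrite PhiCP h mul0r mulr0 subrr.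
  have := CP_neq0 N charK0 h1; rewrite (IH _ _ hC) ?eqxx //.
  apply: leq_trans (sizeCP _ _) _; by case: (size Q) hs.
rewrite (size1_polyC h1) PhiC in h.
by rewrite (size1_polyC h1) (ev_inj HA HN h).
Qed.

Lemma Phi_inj P Q : Phi P = Phi Q -> P = Q.
Proof.
move=> e; apply/eqP; rewrite -subr_eq0; apply/eqP/Phi_inj0.
by rewrite PhiB e subrr.
Qed.

Lemma centralizer b : b * x = x * b -> exists q, b = ev q.
Proof.
have [P <-] := Phi_surj HA b; move=> e.
case: (ltnP 1 (size P)) => h1.
  have : Phi (CP N P) = 0 by rewrite PhiCP e subrr.
  by move/Phi_inj0/eqP; rewrite (negbTE (CP_neq0 N charK0 h1)).
by exists P`_0; rewrite {1}(size1_polyC h1) PhiC.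
Qed.

Lemma XN_neq0 : ('X^N : {poly K}) != 0.
Proof. exact: monic_neq0 (monicXn _ N). Qed.

Lemma xN_reg a : x ^+ N * a = 0 -> a = 0.
Proof.
have [P <-] := Phi_surj HA a; move=> h.
have : Phi (('X^N)%:P * P) = 0 by rewrite PhiCmul rmorphXn /= horner_algX.
move/Phi_inj0/eqP; rewrite mulf_eq0 polyC_eq0 (negbTE XN_neq0) /=.
by move/eqP ->; rewrite Phi0.
Qed.

Lemma oneA_neq0 : (1 : A) != 0.
Proof.
apply/eqP => h; have : ev 1 = 0 by rewrite rmorph1.
by move/(ev_inj HA HN)/eqP; rewrite oner_eq0.
Qed.

Lemma comm_ideal a b : exists r, a * b - b * a = x ^+ N * r.
Proof.
have [P <-] := Phi_surj HA a; have [Q <-] := Phi_surj HA b.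
rewrite !(Phi_mul rel) !mulPQ_comm -PhiB (mulrC Q P).
set E1 := \sum_(j < size P) _; set E2 := \sum_(j < size Q) _.
exists (Phi (E1 - E2)).
have -> : P * Q + ('X^N)%:P * E1 - (P * Q + ('X^N)%:P * E2) = ('X^N)%:P * (E1 - E2) by ring.
by rewrite PhiCmul rmorphXn /= horner_algX.
Qed.

Lemma unit_scalar (a b : A) : a * b = 1 -> exists c : K, a = c%:A.
Proof.
have [P <-] := Phi_surj HA a; have [Q <-] := Phi_surj HA b.
move=> h.
have hP : P != 0 by apply: contra_eqN h => /eqP ->; rewrite Phi0 mul0r eq_sym oneA_neq0.
have hQ : Q != 0 by apply: contra_eqN h => /eqP ->; rewrite Phi0 mulr0 eq_sym oneA_neq0.
have e : mulPQ N P Q = 1 by apply: Phi_inj; rewrite -(Phi_mul rel) h Phi1.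
have [s l] := mulPQ_size N hP hQ; rewrite e size_poly1 lead_coef1 in s l.
have sP : size P = 1%N.
  move: s; rewrite -!size_poly_gt0 in hP hQ; lia.
have sQ : size Q = 1%N.
  rewrite -!size_poly_gt0 in hP hQ; move: s; rewrite sP; lia.
rewrite (size1_polyC (eq_leq sP)) in l *; rewrite (size1_polyC (eq_leq sQ)) in l.
rewrite !lead_coefC in l.
have /eqP : size (P`_0 * Q`_0) = 1%N by rewrite -l size_poly1.
rewrite size_mul_eq1 => /andP[/eqP h1 _].
by exists (P`_0)`_0; rewrite PhiC {1}(size1_polyC (eq_leq h1)) horner_algC.
Qed.


Lemma ev_injE p q : ev p = ev q -> p = q.
Proof.
move=> e; apply/eqP; rewrite -subr_eq0; apply/eqP/(ev_inj HA HN).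
by rewrite rmorphB /= e subrr.
Qed.

Lemma evZX (d : K) k : ev (d *: 'X^k) = d *: x ^+ k.
Proof. by rewrite -mul_polyC rmorphM /= horner_algC rmorphXn /= horner_algX mulr_algl. Qed.

Lemma Phi_pow P k : P != 0 -> exists R, Phi P ^+ k = Phi R /\ size R = (k * (size P).-1).+1.
Proof.
move=> hP; have hs : (0 < size P)%N by rewrite size_poly_gt0.
elim: k => [|k [R [e sR]]]; first by exists 1; rewrite expr0 Phi1 size_poly1 mul0n.
have hR : R != 0 by rewrite -size_poly_gt0 sR.
exists (mulPQ N P R); rewrite exprS e (Phi_mul rel); split => //.
have [s' _] := mulPQ_size N hP hR; rewrite s' sR mulSn.
move: hs; case: (size P) => [|s] //= _; lia.
Qed.

Lemma poly_pow_X (p : {poly K}) (c : K) : c != 0 -> p ^+ N = c *: 'X^N ->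
  exists d : K, p = d *: 'X.
Proof.
move=> hc e.
have hp : p != 0.
  apply: contra_eqN e => /eqP ->; rewrite expr0n gtn_eqF //= eq_sym scaler_eq0 negb_or hc.
  exact: XN_neq0.
have hs : size p = 2%N.
  have := size_exp p N; rewrite e size_scale // size_polyXn /= => h.
  have : (size p).-1 = 1%N by apply/eqP; rewrite -(eqn_pmul2r HN) mul1n -h.
  by move: hp; rewrite -size_poly_gt0; case: (size p) => [|[|k]] //= _ ->.
have h0 : p`_0 = 0.
  have := congr1 (fun q => q.[0]) e; rewrite /= horner_exp hornerZ hornerXn.
  rewrite expr0n gtn_eqF //= mulr0 => /eqP; rewrite expf_eq0 HN horner_coef0 /=.
  by move/eqP.
exists p`_1; apply/polyP => i; rewrite coefZ coefX.
case: i => [|[|i]] /=; first by rewrite h0 mulr0.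
  by rewrite mulr1.
by rewrite mulr0 nth_default // hs.
Qed.

Lemma pow_scalarX (a : A) (c : K) : c != 0 -> a ^+ N = c *: x ^+ N ->
  exists d : K, a = d *: x.
Proof.
have [P <-] := Phi_surj HA a; move=> hc e.
have hP : P != 0.
  apply: contra_eqN e => /eqP ->; rewrite Phi0 expr0n gtn_eqF //= eq_sym.
  apply/eqP => h; have : x ^+ N * c%:A = 0 by rewrite mulr_algr.
  move/xN_reg/eqP; rewrite scaler_eq0 (negbTE hc) (negbTE oneA_neq0).
  by [].
have [R [eR sR]] := Phi_pow N hP.
have eC : c *: x ^+ N = Phi ((c *: 'X^N)%:P) by rewrite PhiC evZX.
have e2 := e; rewrite eR eC in e2; have eq := Phi_inj e2.
have : (size R <= 1)%N by rewrite eq size_polyC_leq1.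
rewrite sR ltnS leqn0 muln_eq0 (gtn_eqF HN) /= => /eqP hs1.
have h1 : (size P <= 1)%N by move: hs1; case: (size P) => [|[|]].
rewrite (size1_polyC h1) PhiC in e.
have e' : ev ((P`_0) ^+ N) = ev (c *: 'X^N) by rewrite evZX -e rmorphXn.
have [d hd] := poly_pow_X hc (ev_injE e').
by exists d; rewrite (size1_polyC h1) PhiC hd -mul_polyC rmorphM /= horner_algC horner_algX mulr_algl.
Qed.

End Struct.


Lemma inv_hom (K : fieldType) (A : algType K) (f g : A -> A) :
  is_alg_hom f -> cancel f g -> cancel g f -> is_alg_hom g.
Proof.
move=> hf fg gf; have fi := can_inj fg.
split; [move=> a b | split; [move=> a b | split; [|move=> c a]]]; apply: fi.
- by rewrite (homD _ _ hf) !gf.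
- by rewrite (homM _ _ hf) !gf.
- by rewrite (hom1 hf) gf.
- by rewrite (homZ _ _ hf) !gf.
Qed.

Lemma grp1 (V : zmodType) (a b c : V) : a - b + c - a - (c - b) = 0.
Proof. by rewrite (addrAC (a - b)) (addrAC a) subrr add0r (addrC (-b)) subrr. Qed.

Section Aut.
Variables (K : fieldType) (N : nat) (A : algType K) (x y : A).
Hypothesis HA : presents_AN N x y.
Hypothesis HN : (0 < N)%N.
Hypothesis charK0 : [pchar K] =i pred0.

Let rel : y * x - x * y = x ^+ N := HA.1.
Local Notation ev := (horner_alg x).

Lemma x_neq0 : x != 0.
Proof.
apply/eqP => h; have : ev 'X = 0 by rewrite horner_algX.
by move/(ev_inj HA HN)/eqP; rewrite polyX_eq0.
Qed.

Lemma aut_form f : is_alg_aut f -> exists d : K, exists q,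
  [/\ d != 0, f x = d *: x & f y = d ^+ N.-1 *: y + ev q].
Proof.
rewrite /is_alg_aut; case=> hf [g fg gf]; have hg := inv_hom hf fg gf.
have [r hr] := comm_ideal HA (f y) (f x).
have efx : f x ^+ N = x ^+ N * r.
  by rewrite -(homX _ _ hf) -{1}rel (homB _ _ hf) !(homM _ _ hf) hr.
have [s hs] := comm_ideal HA (g y) (g x).
have egx : g x ^+ N = x ^+ N * s.
  by rewrite -(homX _ _ hg) -{1}rel (homB _ _ hg) !(homM _ _ hg) hs.
have hrs : r * f s = 1.
  have := congr1 f egx; rewrite (homX _ _ hf) gf (homM _ _ hf) (homX _ _ hf) efx => e.
  have : x ^+ N * (1 - r * f s) = 0 by rewrite mulrBr mulr1 mulrA -e subrr.
  by move/(xN_reg HA HN charK0)/eqP; rewrite subr_eq0 => /eqP e1; rewrite -e1.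
have [c hc] := unit_scalar HA HN charK0 hrs.
have hc0 : c != 0.
  apply/eqP => c0; move: hrs; rewrite hc c0 scale0r mul0r => /eqP.
  by rewrite eq_sym (negbTE (oneA_neq0 HA HN)).
rewrite hc mulr_algr in efx.
have [d hd] := pow_scalarX HA HN charK0 hc0 efx.
have hd0 : d != 0.
  apply/eqP => d0; move: hd; rewrite d0 scale0r => /(congr1 g); rewrite fg (hom0 hg).
  by move/eqP; rewrite (negbTE x_neq0).
set k := d ^+ N.-1.
have hfy : f y * x - x * f y = k *: (y * x - x * y).
  have := congr1 f rel; rewrite (homB _ _ hf) !(homM _ _ hf) (homX _ _ hf) hd.
  rewrite -scalerAr -scalerAl -scalerBr exprZn rel => e.
  apply: (scalerI hd0); rewrite e scalerA -exprS prednK //.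
have hb : (f y - k *: y) * x = x * (f y - k *: y).
  apply/eqP; rewrite -subr_eq0; apply/eqP.
  rewrite mulrBl mulrBr -scalerAl -scalerAr.
  move/eqP: hfy; rewrite subr_eq => /eqP ->.
  by rewrite scalerBr grp1.
have [q hq] := centralizer HA HN charK0 hb.
by exists d, q; split => //; rewrite -hq subrKC.
Qed.

End Aut.


Lemma natr_inj (K : fieldType) (charK0 : [pchar K] =i pred0) (m n : nat) :
  m%:R = n%:R :> K -> m = n.
Proof.
wlog hmn : m n / (m <= n)%N => [W|].
  by move=> e; case: (leqP m n) => h; [exact: W | apply/esym/W => //; apply: ltnW].
move=> e; have : (n - m)%:R = 0 :> K by rewrite natrB // e subrr.
move/eqP; rewrite (pcharf0P _).1 // subn_eq0 => h; apply/eqP.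
by rewrite eqn_leq hmn h.
Qed.

Lemma coef_hornerCX (K : fieldType) (c : K) (p : {poly K}) i :
  (horner_alg (c *: 'X) p)`_i = c ^+ i * p`_i.
Proof.
elim/poly_ind: p i => [|p a IH] i; first by rewrite rmorph0 coef0 mulr0.
rewrite rmorphD rmorphM /= horner_algX horner_algC alg_polyC coefD coefC coefD coefC.
rewrite -scalerAr coefZ coefMX coefMX.
case: i => [|i] /=; first by rewrite mulr0 !add0r expr0 mul1r.
by rewrite IH !addr0 mulrA -exprS.
Qed.

Lemma ev_hom (K : fieldType) (A : algType K) (a : A) : is_alg_hom (horner_alg a).
Proof.
split; [by move=> ??; rewrite rmorphD | split; [by move=> ??; rewrite rmorphM |
  split; [by rewrite rmorph1 | by move=> c p; rewrite -mul_polyC rmorphM /= horner_algC mulr_algl]]].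
Qed.

Section Main.
Variables (K : fieldType) (N : nat) (A : algType K) (x y : A).
Hypothesis HA : presents_AN N x y.
Hypothesis HN : (0 < N)%N.
Hypothesis charK0 : [pchar K] =i pred0.

Let rel : y * x - x * y = x ^+ N := HA.1.
Local Notation ev := (horner_alg x).

Lemma ex_mk (a b : A) : b * a - a * b = a ^+ N ->
  exists f : A -> A, [/\ is_alg_hom f, f x = a & f y = b].
Proof. by move=> r; have [f [? ? ? _]] := HA.2 A a b r; exists f. Qed.

Definition mkhom (a b : A) (r : b * a - a * b = a ^+ N) : A -> A :=
  proj1_sig (constructive_indefinite_description _ (ex_mk r)).

Lemma mkhomP a b r : [/\ is_alg_hom (@mkhom a b r), mkhom r x = a & mkhom r y = b].
Proof. exact: (proj2_sig (constructive_indefinite_description _ (ex_mk r))). Qed.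

Lemma relS (t : K) : (y + t *: x ^+ (N - 1)) * x - x * (y + t *: x ^+ (N - 1)) = x ^+ N.
Proof.
rewrite mulrDl mulrDr -scalerAl -scalerAr -(commrX (N - 1) (commr_refl x)).
by rewrite (addrC (x * y)) addrKA.
Qed.

Definition sig (t : K) : A -> A := mkhom (relS t).

Lemma sig_hom t : is_alg_hom (sig t). Proof. by case: (mkhomP (relS t)). Qed.
Lemma sig_x t : sig t x = x. Proof. by case: (mkhomP (relS t)). Qed.
Lemma sig_y t : sig t y = y + t *: x ^+ (N - 1). Proof. by case: (mkhomP (relS t)). Qed.

Lemma sig_ev t q : sig t (ev q) = ev q.
Proof. by rewrite (hom_ev _ _ (sig_hom t)) sig_x. Qed.

Lemma sig_comp s t : sig s \o sig t =1 sig (s + t).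
Proof.
apply: (uniq_hom HA (hom_comp (sig_hom t) (sig_hom s)) (sig_hom (s + t))) => /=.
  by rewrite !sig_x.
rewrite sig_y (homD _ _ (sig_hom s)) (homZ _ _ (sig_hom s)) (homX _ _ (sig_hom s)).
by rewrite sig_x !sig_y scalerDl addrA.
Qed.

Lemma sig0 : sig 0 =1 id.
Proof.
apply: (uniq_hom HA (sig_hom 0) (@hom_id _ A)); first by rewrite sig_x.
by rewrite sig_y scale0r addr0.
Qed.

Lemma sig_aut t : is_alg_aut (sig t).
Proof.
split; first exact: sig_hom.
exists (sig (- t)) => a.
  by rewrite -[sig (- t) _]/((sig (- t) \o sig t) a) sig_comp addNr sig0.
by rewrite -[sig t _]/((sig t \o sig (- t)) a) sig_comp subrr sig0.
Qed.

Lemma relT (q : {poly K}) : (y + ev q) * x - x * (y + ev q) = x ^+ N.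
Proof. by rewrite mulrDl mulrDr ev_commx (addrC (x * y)) addrKA. Qed.

Definition tau q : A -> A := mkhom (relT q).
Lemma tau_hom q : is_alg_hom (tau q). Proof. by case: (mkhomP (relT q)). Qed.
Lemma tau_x q : tau q x = x. Proof. by case: (mkhomP (relT q)). Qed.
Lemma tau_y q : tau q y = y + ev q. Proof. by case: (mkhomP (relT q)). Qed.
Lemma tau_ev q p : tau q (ev p) = ev p.
Proof. by rewrite (hom_ev _ _ (tau_hom q)) tau_x. Qed.

Lemma tau_can q : cancel (tau q) (tau (- q)).
Proof.
move=> a; apply: (uniq_hom HA (hom_comp (tau_hom q) (tau_hom (- q))) (@hom_id _ A)) => /=.
  by rewrite !tau_x.
by rewrite tau_y (homD _ _ (tau_hom _)) tau_ev tau_y rmorphN subrK.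
Qed.

Lemma tau_aut q : is_alg_aut (tau q).
Proof.
split; first exact: tau_hom.
by exists (tau (- q)); [exact: tau_can | have := tau_can (- q); rewrite opprK].
Qed.

Lemma relTh (l : K) : (l ^+ N.-1 *: y) * (l *: x) - (l *: x) * (l ^+ N.-1 *: y) = (l *: x) ^+ N.
Proof.
rewrite -!scalerAl -!scalerAr !scalerA (mulrC l) -scalerBr rel exprZn.
by rewrite -exprSr prednK.
Qed.

Definition theta l : A -> A := mkhom (relTh l).
Lemma theta_hom l : is_alg_hom (theta l). Proof. by case: (mkhomP (relTh l)). Qed.
Lemma theta_x l : theta l x = l *: x. Proof. by case: (mkhomP (relTh l)). Qed.
Lemma theta_y l : theta l y = l ^+ N.-1 *: y. Proof. by case: (mkhomP (relTh l)). Qed.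

Lemma theta_can l : l != 0 -> cancel (theta l) (theta l^-1).
Proof.
move=> hl a; apply: (uniq_hom HA (hom_comp (theta_hom l) (theta_hom l^-1)) (@hom_id _ A)) => /=.
  by rewrite theta_x (homZ _ _ (theta_hom _)) theta_x scalerA mulfV // scale1r.
by rewrite theta_y (homZ _ _ (theta_hom _)) theta_y scalerA -exprMn mulfV // expr1n scale1r.
Qed.

Lemma theta_aut l : l != 0 -> is_alg_aut (theta l).
Proof.
move=> hl; split; first exact: theta_hom.
exists (theta l^-1); first exact: theta_can.
by have := theta_can (invr_neq0 hl); rewrite invrK.
Qed.

End Main.


Theorem corollary2p5 (K : fieldType) (charK0 : [pchar K] =i pred0)
  (N : nat) (HN : (0 < N)%N) (A : algType K) (x y : A)
  (HA : presents_AN N x y) :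
  exists sigma : K -> A -> A,
    (* sigma_t is an automorphism with the prescribed values, and is unique *)
    (forall t : K, [/\ is_alg_aut (sigma t), sigma t x = x &
                      sigma t y = y + t *: x ^+ (N - 1)]) /\
    (forall (t : K) (s : A -> A), is_alg_aut s -> s x = x ->
        s y = y + t *: x ^+ (N - 1) -> s =1 sigma t) /\
    (* sigma_t is central in Aut(A) *)
    (forall (t : K) (f : A -> A), is_alg_aut f ->
        sigma t \o f =1 f \o sigma t) /\
    (* t |-> sigma_t is a group homomorphism (K,+) -> Aut(A) *)
    sigma 0 =1 id /\
    (forall s t : K, sigma (s + t) =1 sigma s \o sigma t) /\
    (* it is injective *)
    (forall s t : K, sigma s =1 sigma t -> s = t) /\
    (* its image is the whole center of Aut(A) *)
    (forall g : A -> A, is_alg_aut g ->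
        (forall f : A -> A, is_alg_aut f -> g \o f =1 f \o g) ->
        exists t : K, g =1 sigma t).
Proof.
exists (sig HA).
split; [|split; [|split; [|split; [|split; [|split]]]]].
- by move=> t; split; [exact: sig_aut | exact: sig_x | exact: sig_y].
- move=> t s hs sx sy; apply: (uniq_hom HA hs.1 (sig_hom HA t)).
    by rewrite sx sig_x.
  by rewrite sy sig_y.
- move=> t f hf; have [d [q [hd0 fx fy]]] := aut_form HA HN charK0 hf.
  apply: (uniq_hom HA (hom_comp hf.1 (sig_hom HA t)) (hom_comp (sig_hom HA t) hf.1)) => /=.
    by rewrite fx (homZ _ _ (sig_hom HA t)) !sig_x fx.
  rewrite fy sig_y (homD _ _ hf.1) (homZ _ _ hf.1) (homX _ _ hf.1) fx fy.
  rewrite (homD _ _ (sig_hom HA t)) (homZ _ _ (sig_hom HA t)) sig_y sig_ev.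
  by rewrite exprZn scalerDr !scalerA subn1 (mulrC t) addrAC.
- exact: sig0.
- by move=> s t a; rewrite (sig_comp HA s t a).
- move=> s t e; have := e y; rewrite !sig_y => /addrI.
  rewrite -!(evZX x) => /(ev_injE HA HN) ep.
  have := congr1 (fun p : {poly K} => p`_(N - 1)) ep.
  by rewrite /= !coefZ coefXn eqxx !mulr1.
move=> g hg hc.
have [a [p [ha0 gx gy]]] := aut_form HA HN charK0 hg.
set k := a ^+ N.-1 in gy.
have hg1 := hg.1.
have e1 := hc _ (tau_aut HA 1) y.
rewrite /= tau_y (homD _ _ hg1) gy rmorph1 (hom1 hg1) in e1.
rewrite (homD _ _ (tau_hom HA 1)) (homZ _ _ (tau_hom HA 1)) tau_y tau_ev rmorph1 scalerDr in e1.
have hk : k = 1.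
  move: e1; rewrite [RHS]addrAC => /addrI /eqP.
  rewrite -subr_eq0 -{1}(scale1r (1 : A)) -scalerBl scaler_eq0 (negbTE (oneA_neq0 HA HN)) orbF.
  by rewrite subr_eq0 => /eqP /esym.
have e2 := hc _ (tau_aut HA 'X) y.
rewrite /= tau_y (homD _ _ hg1) gy horner_algX gx in e2.
rewrite (homD _ _ (tau_hom HA _)) (homZ _ _ (tau_hom HA _)) tau_y tau_ev horner_algX in e2.
rewrite scalerDr hk !scale1r in e2.
have ha : a = 1.
  move: e2; rewrite [RHS]addrAC => /addrI /eqP.
  rewrite -subr_eq0 -{2}(scale1r x) -scalerBl scaler_eq0 (negbTE (x_neq0 HA HN)) orbF.
  by rewrite subr_eq0 => /eqP.
have h2 : (2%:R : K) != 0 by rewrite ((pcharf0P K).1 charK0).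
have e3 := hc _ (theta_aut HA HN h2) y.
rewrite /= theta_y (homZ _ _ hg1) gy hk scale1r in e3.
rewrite (homD _ _ (theta_hom HA HN _)) theta_y (hom_ev _ _ (theta_hom HA HN _)) theta_x in e3.
rewrite scalerDr in e3; move/addrI: e3 => e3.
have ep : horner_alg (2%:R *: 'X) p = (2%:R) ^+ N.-1 *: p.
  apply: (ev_injE HA HN).
  by rewrite (hom_ev _ _ (ev_hom x)) (homZ _ _ (ev_hom x)) horner_algX (homZ _ _ (ev_hom x)) e3.
have hp : p = p`_(N.-1) *: 'X^(N.-1).
  apply/polyP => i; rewrite coefZ coefXn.
  have := congr1 (fun q : {poly K} => q`_i) ep; rewrite /= coef_hornerCX coefZ.
  case: (eqVneq i N.-1) => [-> _|hi]; first by rewrite mulr1.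
  rewrite mulr0 => /eqP; rewrite -subr_eq0 -mulrBl mulf_eq0 => /orP[|/eqP //].
  rewrite subr_eq0 -!natrX => /eqP /(natr_inj charK0) /eqP.
  by rewrite eqn_exp2l // (negbTE hi).
exists p`_(N.-1); apply: (uniq_hom HA hg1 (sig_hom HA _)).
  by rewrite sig_x gx ha scale1r.
by rewrite sig_y gy hk scale1r {1}hp evZX subn1.
Qed.
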